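(* Let $X$ be a weak complicial set, $x\in X_0$ a vertex and $n\ge1$. Define a multiplication on $\tau_n(X,x)$ by $[\alpha][\beta]=[d_n\theta]$, where $\theta:\Delta^n[n+1]\to X$ is any stratified map with $d_{n-1}\theta=\alpha$, $d_{n+1}\theta=\beta$ and $d_i\theta$ constant at $x$ for $i\notin\{n-1,n,n+1\}$ (such $\theta$ exists by lifting along $\Lambda^n[n+1]\hookrightarrow\Delta^n[n+1]$, and the class $[d_n\theta]$ depends only on $[\alpha],[\beta]$). Then this multiplication makes $\tau_n(X,x)$ a monoid, whose unit is the class of the constant $n$-simplex at $x$.
   Context: A stratified simplicial set is a pair $(X,tX)$ where $X$ is a simplicial set and $tX$ is a set of simplices of $X$ (thin simplices) containing all degenerate simplices and no $0$-simplices; stratified maps are simplicial maps preserving thin simplices. A regular stratified subset $(X,tX)\subset(Y,tY)$ means $X\subset Y$, $tX=X\cap tY$. For $n\ge1$, $\Delta[n]_t$ is $\Delta[n]$ with thin simplices the degenerate ones and $\mathrm{Id}_{[n]}$. For $k\in[n]$, $\Delta^k[n]$ is $\Delta[n]$ with thin simplices the degenerate ones and all $\alpha:[m]\to[n]$ with $\{k-1,k,k+1\}\cap[n]\subset\mathrm{Im}(\alpha)$; $\Lambda^k[n]$ is the regular stratified subset of $\Delta^k[n]$ generated by the faces $\delta_i$, $i\neq k$; $\Delta^k[n]''$ (resp. $\Lambda^k[n]'$) is $\Delta^k[n]$ (resp. $\Lambda^k[n]$) with additionally all its $(n-1)$-simplices thin; $\Delta^k[n]'=\Delta^k[n]\cup\Lambda^k[n]'$.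 A weak complicial set is a stratified simplicial set with the right lifting property against $\Lambda^k[n]\hookrightarrow\Delta^k[n]$ ($n\ge1$, $k\in[n]$) and $\Delta^k[n]'\hookrightarrow\Delta^k[n]''$ ($n\ge2$, $k\in[n]$). The product $X\circledast Y$ has underlying simplicial set $X\times Y$, with $(x,y)$ thin iff $x$ and $y$ are thin. For stratified maps $f,g:A\to X$ and an inclusion $B\hookrightarrow A$ with $f|_B=g|_B$, $f\sim_B g$ means there is a stratified map $H:A\circledast\Delta[1]_t\to X$ with $H|_{A\times\{0\}}=f$, $H|_{A\times\{1\}}=g$ and $H|_{B\circledast\Delta[1]_t}=f|_B\circ\mathrm{proj}_B$. Here $n$-simplices of $X$ are regarded as stratified maps $\Delta[n]\to X$ where $\Delta[n]$ carries the stratification with only degenerate simplices thin. For $n\ge1$, $\tau_n(X,x)$ (the $n$-th homotopy monoid) is the set of equivalence classes under $\sim_{\partial\Delta[n]}$ of $n$-simplices $\alpha$ of $X$ whose restriction to $\partial\Delta[n]$ is constant at $x$. *)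

(* Defs.v *)
From Stdlib Require Import Relations.
From mathcomp Require Import all_boot.
Set Implicit Arguments. Unset Strict Implicit. Unset Printing Implicit Defensive.

Definition monob m n (f : {ffun 'I_m.+1 -> 'I_n.+1}) : bool :=
  [forall i : 'I_m.+1, forall j : 'I_m.+1, (i <= j) ==> (f i <= f j)].
Definition mono m n := {f : {ffun 'I_m.+1 -> 'I_n.+1} | monob f}.
Definition mfun m n (f : mono m n) : 'I_m.+1 -> 'I_n.+1 := fun i => sval f i.

Lemma mono_le m n (f : mono m n) (i j : 'I_m.+1) : i <= j -> mfun f i <= mfun f j.
Proof.
case: f => g /= Hg Hij.
have /forallP H := Hg; have /forallP H2 := H i.
by have /implyP := H2 j; apply.
Qed.

Definition mk_mono m n (f : 'I_m.+1 -> 'I_n.+1)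
  (H : forall i j : 'I_m.+1, i <= j -> f i <= f j) : mono m n.
Proof.
exists (finfun f); apply/forallP => i; apply/forallP => j; apply/implyP => Hij.
by rewrite !ffunE; apply: H.
Defined.

Definition mid n : mono n n := @mk_mono n n (fun i => i) (fun i j h => h).
Definition mcomp l m n (f : mono m n) (g : mono l m) : mono l n :=
  @mk_mono l n (fun i => mfun f (mfun g i)) (fun i j h => mono_le f (mono_le g h)).
Definition mconst m n (k : 'I_n.+1) : mono m n :=
  @mk_mono m n (fun _ => k) (fun _ _ _ => leqnn k).
Definition delta n (i : 'I_n.+2) : mono n n.+1.
Proof.
refine (@mk_mono n n.+1 (fun j => lift i j) _) => j j' h.
by rewrite /= leq_bump2.
Defined.
Definition in_image m n (a : mono m n) (i : nat) : Prop :=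
  exists j : 'I_m.+1, nat_of_ord (mfun a j) = i.

Record sset := SSet { sobj : nat -> Type;
                      sact : forall m n, mono m n -> sobj n -> sobj m }.
Arguments sact {s m n}.
Definition is_sset (X : sset) : Prop :=
  (forall n (x : sobj X n), sact (mid n) x = x) /\
  (forall l m n (f : mono m n) (g : mono l m) (x : sobj X n),
      sact (mcomp f g) x = sact g (sact f x)).

Definition thinness (X : sset) := forall m, sobj X m -> Prop.

Definition degenerate (X : sset) m (x : sobj X m) : Prop :=
  exists p (f : mono m p) (y : sobj X p), p < m /\ x = sact f y.

Definition is_stratified (X : sset) (tX : thinness X) : Prop :=
  (forall m (x : sobj X m), degenerate x -> tX m x) /\
  (forall x : sobj X 0, ~ tX 0 x).

Definition smap (X Y : sset) := forall m, sobj X m -> sobj Y m.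
Definition simplicial (X Y : sset) (h : smap X Y) : Prop :=
  forall m k (f : mono m k) (a : sobj X k), h m (sact f a) = sact f (h k a).
Definition preserves_thin (X Y : sset) (tA : thinness X) (tY : thinness Y)
  (h : smap X Y) : Prop := forall m a, tA m a -> tY m (h m a).

(* Right lifting property of (Y,tY) against the inclusion of stratified sets
   (P, tS) -> (A, tT), where P is a simplicial subset of A (given by a predicate)
   with thinness tS (on P), and tT the thinness of A.
   A map out of P is represented by a function on A whose values off P are
   irrelevant. *)
Definition has_rlp (A : sset) (P tS tT : thinness A) (Y : sset) (tY : thinness Y)
  : Prop :=
  forall g : smap A Y,
    (forall m k (f : mono m k) (a : sobj A k), P k a -> g m (sact f a) = sact f (g k a)) ->
    (forall m a, P m a -> tS m a -> tY m (g m a)) ->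
    exists h : smap A Y, simplicial h /\ preserves_thin tT tY h /\
                         (forall m a, P m a -> h m a = g m a).

Definition Delta (n : nat) : sset :=
  @SSet (fun m => mono m n) (fun m k (f : mono m k) (a : mono k n) => mcomp a f).
Definition sprod (X Y : sset) : sset :=
  @SSet (fun m => (sobj X m * sobj Y m)%type)
        (fun m k f p => (sact f p.1, sact f p.2)).
Definition thin_prod (X Y : sset) (tX : thinness X) (tY : thinness Y)
  : thinness (sprod X Y) := fun m p => tX m p.1 /\ tY m p.2.

Definition thin_deg n : thinness (Delta n) := fun m a => @degenerate (Delta n) m a.
(* Delta[n]_t : degenerate simplices and the identity thin *)
Definition thin_t n : thinness (Delta n) := fun m a =>
  @degenerate (Delta n) m a \/ (m = n /\ forall j : 'I_m.+1, nat_of_ord (mfun a j) = j).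
Definition thin_Dk n k : thinness (Delta n) := fun m a =>
  @degenerate (Delta n) m a \/
  (forall i, i <= n -> k.-1 <= i <= k.+1 -> in_image a i).
Definition in_Lambda n k : thinness (Delta n) := fun m a =>
  exists i, i <= n /\ i <> k /\ ~ in_image a i.
Definition in_boundary n : thinness (Delta n) := fun m a =>
  exists i, i <= n /\ ~ in_image a i.
Definition thin_D' n k : thinness (Delta n) := fun m a =>
  @thin_Dk n k m a \/ (m.+1 = n /\ @in_Lambda n k m a).
Definition thin_D'' n k : thinness (Delta n) := fun m a =>
  @thin_Dk n k m a \/ m.+1 = n.

Arguments thin_deg : clear implicits.
Arguments thin_t : clear implicits.
Arguments thin_Dk : clear implicits.
Arguments in_Lambda : clear implicits.
Arguments in_boundary : clear implicits.
Arguments thin_D' : clear implicits.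
Arguments thin_D'' : clear implicits.

Definition weak_complicial (X : sset) (tX : thinness X) : Prop :=
  (forall n k, 1 <= n -> k <= n ->
     has_rlp (in_Lambda n k) (thin_Dk n k) (thin_Dk n k) tX) /\
  (forall n k, 2 <= n -> k <= n ->
     has_rlp (fun _ _ => True) (thin_D' n k) (thin_D'' n k) tX).

Definition rel_homotopic (A : sset) (tA : thinness A) (B : thinness A)
  (X : sset) (tX : thinness X) (f g : smap A X) : Prop :=
  (forall m a, B m a -> f m a = g m a) /\
  exists H : smap (sprod A (Delta 1)) X,
    simplicial H /\ preserves_thin (thin_prod tA (thin_t 1)) tX H /\
    (forall m a, H m (a, mconst m (@ord0 1)) = f m a) /\
    (forall m a, H m (a, mconst m (@ord_max 1)) = g m a) /\
    (forall m a t, B m a -> H m (a, t) = f m a).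

Definition yon (X : sset) n (a : sobj X n) : smap (Delta n) X :=
  fun m (b : mono m n) => sact b a.

Definition cst (X : sset) (x : sobj X 0) m : sobj X m := sact (mconst m (@ord0 0)) x.

Definition bdry_const (X : sset) (x : sobj X 0) n (a : sobj X n) : Prop :=
  forall m (b : mono m n), @in_boundary n m b -> sact b a = cst x m.

Definition htp (X : sset) (tX : thinness X) (x : sobj X 0) n (a b : sobj X n) : Prop :=
  bdry_const x a /\ bdry_const x b /\
  rel_homotopic (thin_deg n) (in_boundary n) tX (yon a) (yon b).

Definition cls (X : sset) (tX : thinness X) (x : sobj X 0) n (a : sobj X n)
  : sobj X n -> Prop := fun b => clos_refl_sym_trans _ (@htp X tX x n) a b.

Definition tau (X : sset) (tX : thinness X) (x : sobj X 0) n :=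
  {P : sobj X n -> Prop | exists a, bdry_const x a /\ P = cls tX x a}.
Definition tcls (X : sset) (tX : thinness X) (x : sobj X 0) n (a : sobj X n)
  (Ha : bdry_const x a) : tau tX x n :=
  exist _ (cls tX x a) (ex_intro _ a (conj Ha erefl)).

Definition face (X : sset) n (i : 'I_n.+2) (t : sobj X n.+1) : sobj X n :=
  sact (delta i) t.

Definition theta_cond (X : sset) (tX : thinness X) (x : sobj X 0) n
  (a b : sobj X n) (t : sobj X n.+1) : Prop :=
  (forall m (g : mono m n.+1), @thin_Dk n.+1 n m g -> tX m (sact g t)) /\
  face (inord n.-1) t = a /\ face (inord n.+1) t = b /\
  (forall i : 'I_n.+2, nat_of_ord i <> n.-1 -> nat_of_ord i <> n ->
      nat_of_ord i <> n.+1 -> face i t = cst x n).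

(* Submission.v *)
Require Import Defs.
From mathcomp Require Import all_boot zify.
From Stdlib Require Import Relations Classical ClassicalEpsilon ProofIrrelevance FunctionalExtensionality PropExtensionality.
Set Implicit Arguments. Unset Strict Implicit. Unset Printing Implicit Defensive.
Set Bullet Behavior "Strict Subproofs".

Definition sv m n (f : mono m n) (p : nat) : nat := nat_of_ord (mfun f (inord p)).

Lemma sv_ord m n (f : mono m n) (i : 'I_m.+1) : nat_of_ord (mfun f i) = sv f i.
Proof. by rewrite /sv inord_val. Qed.

Lemma sv_le m n (f : mono m n) p : sv f p <= n.
Proof. by rewrite /sv -ltnS ltn_ord. Qed.

Lemma sv_mono m n (f : mono m n) p q : p <= q -> q <= m -> sv f p <= sv f q.
Proof.
move=> Hpq Hq; rewrite /sv; apply: mono_le.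
by rewrite !inordK //; lia.
Qed.

Lemma mono_ext m n (f g : mono m n) : (forall p, p <= m -> sv f p = sv g p) -> f = g.
Proof.
move=> H; apply: val_inj; apply/ffunP => i; apply: val_inj.
have := H i; rewrite -!sv_ord /mfun; apply; rewrite -ltnS; exact: ltn_ord.
Qed.

Definition nmono m n (f : nat -> nat)
  (Hm : forall p q, p <= q -> q <= m -> f p <= f q)
  (Hb : forall p, p <= m -> f p <= n) : mono m n.
Proof.
refine (@mk_mono m n (fun i => inord (f i)) _) => i j Hij.
have Hi := ltn_ord i; have Hj := ltn_ord j.
rewrite !inordK; [ apply: Hm => //; lia | rewrite ltnS; apply: Hb; lia | rewrite ltnS; apply: Hb; lia].
Defined.

Lemma sv_nmono m n f Hm Hb p : p <= m -> sv (@nmono m n f Hm Hb) p = f p.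
Proof.
move=> Hp; rewrite /sv /mfun /nmono /mk_mono /= ffunE.
have E : (inord p : 'I_m.+1) = p :> nat by rewrite inordK.
rewrite E inordK // ltnS; exact: Hb.
Qed.

Lemma sv_comp l m n (f : mono m n) (g : mono l m) p : sv (mcomp f g) p = sv f (sv g p).
Proof. by rewrite /sv /mcomp /mk_mono /mfun /= ffunE inord_val. Qed.

Lemma sv_id n p : p <= n -> sv (mid n) p = p.
Proof. by move=> Hp; rewrite /sv /mid /mk_mono /mfun /= ffunE inordK. Qed.

Lemma sv_const m n (k : 'I_n.+1) p : sv (mconst m k) p = k.
Proof. by rewrite /sv /mconst /mk_mono /mfun /= ffunE. Qed.

Definition dl N (i : nat) : mono N N.+1 := delta (inord i).

Lemma sv_dl N i p : i <= N.+1 -> p <= N -> sv (dl N i) p = bump i p.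
Proof. by move=> Hi Hp; rewrite /sv /dl /delta /mk_mono /mfun /= ffunE /= !inordK. Qed.

Lemma mcomp_id_l m n (f : mono m n) : mcomp (mid n) f = f.
Proof. apply: mono_ext => p Hp; by rewrite sv_comp sv_id // sv_le. Qed.
Lemma mcomp_id_r m n (f : mono m n) : mcomp f (mid m) = f.
Proof. apply: mono_ext => p Hp; by rewrite sv_comp sv_id. Qed.
Lemma mcompA k l m n (f : mono m n) (g : mono l m) (h : mono k l) :
  mcomp f (mcomp g h) = mcomp (mcomp f g) h.
Proof. apply: mono_ext => p Hp; by rewrite !sv_comp. Qed.

Definition unb m N (i : nat) (s : mono m N.+1) : mono m N.
Proof.
refine (@nmono m N (fun p => minn (unbump i (sv s p)) N) _ _).
- move=> p q Hpq Hq; have := sv_mono s Hpq Hq; rewrite /unbump; case: (ltnP i (sv s p)); case: (ltnP i (sv s q)); lia.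
- move=> p _; lia.
Defined.

Lemma sv_unb m N i (s : mono m N.+1) p : p <= m -> sv (unb i s) p = minn (unbump i (sv s p)) N.
Proof. move=> Hp; by rewrite /unb sv_nmono. Qed.

Definition misses m N (s : mono m N) (i : nat) := forall p, p <= m -> sv s p <> i.

Lemma unb_fac m N i (s : mono m N.+1) : i <= N.+1 -> misses s i -> s = mcomp (dl N i) (unb i s).
Proof.
move=> Hi Hm; apply: mono_ext => p Hp; rewrite sv_comp sv_unb // sv_dl //; last lia.
have := Hm p Hp; have := sv_le s p; rewrite /bump /unbump.
case: (ltnP i (sv s p)) => H1; case: (leqP i _) => H2; lia.
Qed.

Lemma strict_ge m M (s : mono m M) : (forall p, p < m -> sv s p < sv s p.+1) ->
  forall p q, p <= q -> q <= m -> sv s p + (q - p) <= sv s q.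
Proof.
move=> H p q Hpq; elim: q Hpq => [|q IH] Hpq Hq.
- have -> : p = 0 by lia. lia.
- case: (ltnP p q.+1) => Hp.
  + have := IH ltac:(lia) ltac:(lia); have := H q ltac:(lia); lia.
  + have -> : p = q.+1 by lia. lia.
Qed.

Lemma trich m M (s : mono m M) :
  (exists i, i <= M /\ misses s i) \/ (exists p, p < m /\ sv s p = sv s p.+1) \/
  (m = M /\ forall p, p <= m -> sv s p = p).
Proof.
case: (classic (exists p, p < m /\ sv s p = sv s p.+1)) => Hni; first by right; left.
have Hst : forall p, p < m -> sv s p < sv s p.+1.
  move=> p Hp; have := sv_mono s (leqnSn p) Hp; case: (ltngtP (sv s p) (sv s p.+1)) => //.
  move=> E; exfalso; apply: Hni; exists p; split => //.
have Hge := strict_ge Hst.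
case: (posnP (sv s 0)) => H0; last first.
  left; exists 0; split => //; move=> p Hp; have := Hge 0 p ltac:(lia) Hp; lia.
case: (classic (exists p, p < m /\ sv s p.+1 > (sv s p).+1)) => Hgap.
  case: Hgap => p [Hp Hg]; left; exists (sv s p).+1; split.
    have := sv_le s p.+1; lia.
  move=> q Hq; case: (leqP q p) => Hqp.
    have := sv_mono s Hqp ltac:(lia); lia.
  have := sv_mono s (Hqp : p.+1 <= q) Hq; lia.
have Hid : forall p, p <= m -> sv s p = p.
  elim=> [//|p IH] Hp; have := IH ltac:(lia); have := Hst p Hp.
  case: (leqP (sv s p.+1) (sv s p).+1) => Hl; first lia.
  by exfalso; apply: Hgap; exists p.
case: (ltngtP m M) => HmM.
- left; exists M; split => //; move=> p Hp; rewrite Hid //; lia.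
- have := sv_le s m; rewrite Hid //; lia.
- by right; right.
Qed.

Lemma deg_noninj N m (a : mono m N) : @degenerate (Delta N) m a ->
  exists p, p < m /\ sv a p = sv a p.+1.
Proof.
case=> p [f [y [Hp /= ->]]].
case: (classic (exists q, q < m /\ sv f q = sv f q.+1)) => H.
  case: H => q [Hq E]; exists q; split => //; by rewrite !sv_comp E.
exfalso.
have Hst : forall q, q < m -> sv f q < sv f q.+1.
  move=> q Hq; have := sv_mono f (leqnSn q) Hq; case: (ltngtP (sv f q) (sv f q.+1)) => //.
  move=> E; exfalso; apply: H; exists q; split => //.
have := strict_ge Hst (leq0n m) (leqnn m); have := sv_le f m; lia.
Qed.

Definition sg m (p : nat) : mono m.+1 m.
Proof.
refine (@nmono m.+1 m (fun q => minn (unbump p q) m) _ _).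
- move=> q r Hqr _; rewrite /unbump; case: (ltnP p q); case: (ltnP p r); lia.
- move=> q _; lia.
Defined.

Lemma sv_sg m p q : q <= m.+1 -> sv (sg m p) q = minn (unbump p q) m.
Proof. by move=> Hq; rewrite /sg sv_nmono. Qed.

Lemma noninj_fac m N (s : mono m.+1 N) p : p <= m -> sv s p = sv s p.+1 ->
  s = mcomp (mcomp s (dl m p.+1)) (sg m p).
Proof.
move=> Hp E; apply: mono_ext => q Hq; rewrite !sv_comp sv_sg // sv_dl //; try lia.
rewrite /unbump /bump; case: (ltnP p q) => H1.
- have -> : minn (q - 1) m = q.-1 by lia.
  case: (leqP p.+1 q.-1) => H2.
  + by have -> : (true + q.-1) = q by lia.
  + have Eq : q = p.+1 by lia. by rewrite Eq /= E.
- have -> : minn (q - false) m = q by lia.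
  case: (leqP p.+1 q) => H2; first lia. by [].
Qed.

Lemma in_imageP m n (a : mono m n) i : in_image a i <-> exists p, p <= m /\ sv a p = i.
Proof.
split.
- case=> j <-; exists j; split; [rewrite -ltnS; exact: ltn_ord | by rewrite sv_ord].
- case=> p [Hp <-]; exists (inord p); by rewrite /sv.
Qed.

Lemma misses_bdry m N (a : mono m N) i : i <= N -> misses a i -> in_boundary N m a.
Proof.
move=> Hi Hm; exists i; split => // /in_imageP [p [Hp E]]; exact: Hm p Hp E.
Qed.

Lemma bdry_misses m N (a : mono m N) : in_boundary N m a -> exists i, i <= N /\ misses a i.
Proof.
case=> i [Hi Hn]; exists i; split => // p Hp E; apply: Hn; apply/in_imageP; by exists p.
Qed.

Section XS.
Unset Implicit Arguments.
Variables (X : sset) (tX : thinness X) (HX : is_sset X) (Hstr : is_stratified tX) (x : sobj X 0).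
Set Implicit Arguments.

Lemma sact_id n (y : sobj X n) : sact (mid n) y = y.
Proof. exact: HX.1. Qed.
Lemma sact_comp l m n (f : mono m n) (g : mono l m) (y : sobj X n) :
  sact (mcomp f g) y = sact g (sact f y).
Proof. exact: HX.2. Qed.

Definition fc M (i : nat) (y : sobj X M.+1) : sobj X M := sact (dl M i) y.

Lemma cst_act m k (f : mono m k) : sact f (cst x k) = cst x m.
Proof.
rewrite /cst -sact_comp; congr sact; apply: mono_ext => p Hp.
by rewrite sv_comp !sv_const.
Qed.

Lemma deg_thin m (y : sobj X m) : degenerate y -> tX m y.
Proof. exact: Hstr.1. Qed.

Lemma noninj_deg m N (s : mono m N) (y : sobj X N) :
  (exists p, p < m /\ sv s p = sv s p.+1) -> degenerate (sact s y).
Proof.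
case: m s => [|m] s [p [Hp E]]; first by [].
have Hp' : p <= m by lia.
rewrite (noninj_fac Hp' E) sact_comp.
by exists m, (sg m p), (sact (mcomp s (dl m p.+1)) y).
Qed.

Lemma noninj_thin m N (s : mono m N) (y : sobj X N) :
  (exists p, p < m /\ sv s p = sv s p.+1) -> tX m (sact s y).
Proof. move=> H; apply: deg_thin; exact: noninj_deg. Qed.

Lemma cst_deg m : 1 <= m -> degenerate (cst x m).
Proof. move=> Hm; by exists 0, (mconst m ord0), x. Qed.

Lemma cst_thin m : 1 <= m -> tX m (cst x m).
Proof. move=> Hm; apply: deg_thin; exact: cst_deg. Qed.

Lemma sact_miss m N (s : mono m N.+1) (y : sobj X N.+1) i :
  i <= N.+1 -> misses s i -> sact s y = sact (unb i s) (fc i y).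
Proof. move=> Hi Hm; by rewrite /fc -sact_comp -unb_fac. Qed.

Definition bdry n (a : sobj X n) := bdry_const x a.

Lemma bdry_cst n : bdry (cst x n).
Proof. move=> m b _; exact: cst_act. Qed.

Lemma bdry_miss m n (s : mono m n) (a : sobj X n) i : bdry a -> i <= n -> misses s i ->
  sact s a = cst x m.
Proof. move=> Ha Hi Hm; apply: Ha; exact: misses_bdry Hm. Qed.

Lemma dl_misses N i : i <= N.+1 -> misses (dl N i) i.
Proof. move=> Hi p Hp; rewrite sv_dl // /bump; case: leqP; lia. Qed.

Lemma bdry_fc N (a : sobj X N.+1) i : bdry a -> i <= N.+1 -> fc i a = cst x N.
Proof. move=> Ha Hi; apply: (bdry_miss Ha Hi); exact: dl_misses. Qed.

Lemma unb_misses m N (s : mono m N.+1) i i' : i <= N.+1 -> i' <= N.+1 -> i <> i' ->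
  misses s i -> misses s i' -> misses (unb i s) (unbump i i').
Proof.
move=> Hi Hi' Hne Hm Hm' p Hp; rewrite sv_unb //.
have := Hm p Hp; have := Hm' p Hp; have := sv_le s p.
rewrite /unbump; case: (ltnP i (sv s p)); case: (ltnP i i'); lia.
Qed.

Lemma two_miss m N (s : mono m N.+1) (y : sobj X N.+1) i i' :
  (forall j, j <= N.+1 -> bdry (fc j y)) ->
  i <= N.+1 -> i' <= N.+1 -> i <> i' -> misses s i -> misses s i' -> sact s y = cst x m.
Proof.
move=> Hb Hi Hi' Hne Hm Hm'; rewrite (sact_miss y Hi Hm).
apply: (bdry_miss (Hb i Hi) _ (unb_misses Hi Hi' Hne Hm Hm')).
rewrite /unbump; case: ltnP; lia.
Qed.

Definition Shape M (F : nat -> sobj X M) (y : sobj X M.+1) : Prop :=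
  tX M.+1 y /\ forall i, i <= M.+1 -> fc i y = F i.

Lemma thin_of M (y : sobj X M.+1) (P : nat -> Prop) :
  tX M.+1 y -> (forall i, i <= M.+1 -> ~ P i -> fc i y = cst x M) ->
  forall m (s : mono m M.+1), 1 <= m ->
    (forall i, P i -> i <= M.+1 -> exists p, p <= m /\ sv s p = i) -> tX m (sact s y).
Proof.
move=> Hy Hc m s Hm Him.
case: (trich s) => [[i [Hi Hmi]]|[Hni|[Em Hid]]].
- case: (classic (P i)) => HP.
    by case: (Him i HP Hi) => p [Hp E]; case: (Hmi p Hp E).
  rewrite (sact_miss y Hi Hmi) Hc // cst_act; exact: cst_thin.
- exact: noninj_thin.
- subst m; have -> : s = mid M.+1 by apply: mono_ext => p Hp; rewrite Hid // sv_id.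
  by rewrite sact_id.
Qed.

End XS.

Lemma endo_cases m (s : mono m m) :
  (exists p, p < m /\ sv s p = sv s p.+1) \/ (forall p, p <= m -> sv s p = p).
Proof.
case: (classic (exists p, p < m /\ sv s p = sv s p.+1)) => H; [by left | right].
have Hst : forall p, p < m -> sv s p < sv s p.+1.
  move=> p Hp; have := sv_mono s (leqnSn p) Hp; case: (ltngtP (sv s p) (sv s p.+1)) => //.
  move=> E; exfalso; apply: H; exists p; split => //.
move=> p Hp; have H1 := strict_ge Hst (leq0n p) Hp; have H2 := strict_ge Hst Hp (leqnn m).
have := sv_le s m; lia.
Qed.

Lemma unb_dl N i : i <= N.+1 -> unb i (dl N i) = mid N.
Proof.
move=> Hi; apply: mono_ext => p Hp; rewrite sv_unb // sv_dl // sv_id //.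
rewrite /unbump /bump; case: (leqP i p) => H1; case: ltnP; lia.
Qed.

Lemma unb_comp l m N i (a : mono m N.+1) (f : mono l m) : unb i (mcomp a f) = mcomp (unb i a) f.
Proof. apply: mono_ext => p Hp; by rewrite sv_comp !sv_unb // ?sv_le // sv_comp. Qed.

Lemma dl_dl N i j : i < j -> j <= N.+2 ->
  mcomp (dl N.+1 j) (dl N i) = mcomp (dl N.+1 i) (dl N j.-1).
Proof.
move=> Hij Hj; apply: mono_ext => p Hp; rewrite !sv_comp !sv_dl //; try lia.
- rewrite /bump; case: (leqP i p); case: (leqP j.-1 p) => H1 H2; case: leqP; case: leqP; lia.
- rewrite /bump; case: leqP; lia.
- rewrite /bump; case: leqP; lia.
Qed.

Section XS2.
Unset Implicit Arguments.
Variables (X : sset) (tX : thinness X) (HX : is_sset X) (Hstr : is_stratified tX)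
  (Hwc : weak_complicial tX) (x : sobj X 0).
Set Implicit Arguments.

Notation fc := (@fc X).

Lemma fc_fc N i j (y : sobj X N.+2) : i < j -> j <= N.+2 ->
  fc i (fc j y) = fc j.-1 (fc i y).
Proof. move=> Hij Hj; by rewrite /fc -!(sact_comp HX) dl_dl. Qed.

Section Horn.
Variables (M k : nat) (Hk : k <= M.+2) (G : nat -> sobj X M.+1).
Hypothesis Hcomp : forall i j, i < j -> j <= M.+2 -> i <> k -> j <> k ->
  fc i (G j) = fc j.-1 (G i).

Lemma horn_compat m (s : mono m M.+2) i i' : i <= M.+2 -> i' <= M.+2 -> i <> k -> i' <> k ->
  misses s i -> misses s i' -> sact (unb i s) (G i) = sact (unb i' s) (G i').
Proof.
wlog: i i' / i <= i'.
  move=> W Hi Hi' Hk1 Hk2 Hm Hm'; case: (leqP i i') => H; first exact: W.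
  symmetry; apply: W => //; lia.
move=> Hle Hi Hi' Hk1 Hk2 Hm Hm'.
case: (ltngtP i i') => Hlt; last by subst.
2: lia.
have M1 : misses (unb i' s) i.
  have := unb_misses Hi' Hi ltac:(lia) Hm' Hm.
  by have -> : unbump i' i = i by rewrite /unbump ltnNge (ltnW Hlt) subn0.
have M2 : misses (unb i s) i'.-1.
  have := unb_misses Hi Hi' _ Hm Hm'.
  rewrite /unbump Hlt subn1; apply; lia.
rewrite [unb i' s](unb_fac _ M1); last lia.
rewrite [unb i s](unb_fac _ M2); last lia.
rewrite !(sact_comp HX) -/(fc _ _) -/(fc _ _) (Hcomp Hlt) //.
congr sact; apply: mono_ext => p Hp.
rewrite !sv_unb //; have := Hm p Hp; have := Hm' p Hp; have := sv_le s p.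
rewrite /unbump; case: (ltnP i' (sv s p)) => H1; case: (ltnP i (sv s p)) => H2;
  case: (ltnP i _) => H3; case: (ltnP i'.-1 _) => H4; lia.
Qed.

Definition hg : smap (Delta M.+2) X := fun m (s : mono m M.+2) =>
  match excluded_middle_informative (exists i, i <= M.+2 /\ i <> k /\ misses s i) with
  | left H => let i := proj1_sig (constructive_indefinite_description _ H) in
              sact (unb i s) (G i)
  | right _ => sact (unb 0 s) (G 0)
  end.

Lemma hgE m (s : mono m M.+2) i : i <= M.+2 -> i <> k -> misses s i ->
  hg s = sact (unb i s) (G i).
Proof.
move=> Hi Hik Hm; rewrite /hg; case: excluded_middle_informative => H.
- case: (constructive_indefinite_description _ H) => i0 [H0 [H1 H2]] /=.
  exact: horn_compat.
- by exfalso; apply: H; exists i.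
Qed.

Hypothesis Hthin : forall i, i <= M.+2 -> i <> k -> forall m (s : mono m M.+1),
  thin_Dk M.+2 k m (mcomp (dl M.+1 i) s) -> tX m (sact s (G i)).

Lemma horn : exists t : sobj X M.+2,
  (forall m g, thin_Dk M.+2 k m g -> tX m (sact g t)) /\
  forall i, i <= M.+2 -> i <> k -> fc i t = G i.
Proof.
have Hr := Hwc.1 M.+2 k (ltn0Sn _) Hk hg.
case: Hr.
- move=> m k' f a [i [Hi [Hik Hn]]].
  have Hm : misses a i by move=> p Hp E; apply: Hn; apply/in_imageP; exists p.
  have Hm2 : misses (mcomp a f) i by move=> p Hp; rewrite sv_comp; apply: Hm; rewrite sv_le.
  rewrite /= (hgE Hi Hik Hm2) (hgE Hi Hik Hm) -(sact_comp HX); congr sact.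
  exact: unb_comp.
- move=> m a [i [Hi [Hik Hn]]] Ht.
  have Hm : misses a i by move=> p Hp E; apply: Hn; apply/in_imageP; exists p.
  rewrite (hgE Hi Hik Hm); apply: Hthin => //.
  by rewrite -unb_fac.
- move=> h [hs [ht hh]].
  have hE : forall m g, h m g = sact g (h _ (mid M.+2)).
    move=> m g; rewrite -hs /=; by rewrite mcomp_id_l.
  exists (h _ (mid M.+2)); split.
  + move=> m g Hg; rewrite -hE; exact: ht.
  + move=> i Hi Hik; rewrite /fc -hE hh.
    * rewrite (hgE Hi Hik (dl_misses Hi)) unb_dl; [exact: (sact_id HX) | lia].
    * exists i; split => //; split => // /in_imageP [p [Hp E]]; exact: dl_misses Hi p Hp E.
Qed.
End Horn.

Lemma thin_ext M k (Hk : k <= M.+2) (t : sobj X M.+2) :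
  (forall m g, thin_Dk M.+2 k m g -> tX m (sact g t)) ->
  (forall i, i <= M.+2 -> i <> k -> tX _ (fc i t)) -> tX _ (fc k t).
Proof.
move=> Ht Hf.
have Hr := Hwc.2 M.+2 k (isT : 2 <= M.+2) Hk (yon t).
case: Hr.
- move=> m k' f a _ /=; rewrite /yon /=; exact: (sact_comp HX).
- move=> m a _ [Ha|[Em [i [Hi [Hik Hn]]]]]; first exact: Ht.
  have Hm : misses a i by move=> p Hp E; apply: Hn; apply/in_imageP; exists p.
  have Em' : m = M.+1 by lia.
  subst m.
  rewrite /yon (sact_miss HX t Hi Hm).
  case: (endo_cases (unb i a)) => [Hni|Hid].
  + exact: noninj_thin.
  + have -> : unb i a = mid M.+1 by apply: mono_ext => p Hp; rewrite Hid // sv_id.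
    rewrite (sact_id HX); exact: Hf.
- move=> h [_ [ht hh]].
  have := ht _ (dl M.+1 k) (or_intror erefl).
  by rewrite hh.
Qed.
End XS2.

Section XS3.
Unset Implicit Arguments.
Variables (X : sset) (tX : thinness X) (HX : is_sset X) (Hstr : is_stratified tX)
  (Hwc : weak_complicial tX) (x : sobj X 0).
Set Implicit Arguments.

Notation fc := (@fc X).
Notation Shape := (@Shape X tX).
Notation bdry := (@bdry X x).

Lemma fc_cst N i : fc i (cst x N.+1) = cst x N.
Proof. exact: (cst_act HX). Qed.

Definition fv N j (p q r : sobj X N) : nat -> sobj X N := fun i =>
  if i == j then p else if i == j.+1 then q else if i == j.+2 then r else cst x N.

Lemma Shape_ext M (F F' : nat -> sobj X M) y : (forall i, i <= M.+1 -> F i = F' i) ->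
  Shape F y -> Shape F' y.
Proof. move=> E [H1 H2]; split => // i Hi; rewrite -E //; exact: H2. Qed.

Definition dg N j (y : sobj X N) : sobj X N.+1 := sact (sg N j) y.

Lemma dg_shape N j (y : sobj X N) : j <= N -> bdry y ->
  Shape (fun i => if i == j then y else if i == j.+1 then y else cst x N) (dg j y).
Proof.
move=> Hj Hy; split.
  apply: (deg_thin Hstr); by exists N, (sg N j), y.
move=> i Hi; rewrite /fc /dg -(sact_comp HX).
case: eqP => [->|Hij].
  have -> : mcomp (sg N j) (dl N j) = mid N.
    apply: mono_ext => p Hp; rewrite sv_comp sv_dl // ?sv_sg ?sv_id //;
    rewrite /bump /unbump; case: (leqP j p) => ?; try case: ltnP; lia.
  exact: (sact_id HX).
case: eqP => [->|Hij1].
  have -> : mcomp (sg N j) (dl N j.+1) = mid N.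
    apply: mono_ext => p Hp; rewrite sv_comp sv_dl // ?sv_sg ?sv_id //;
    rewrite /bump /unbump; case: (leqP j.+1 p) => ?; try case: ltnP; lia.
  exact: (sact_id HX).
apply: (@bdry_miss X x _ _ _ _ (if i < j then i else i.-1) Hy).
  case: ltnP; lia.
move=> p Hp; rewrite sv_comp sv_dl // sv_sg; last by rewrite /bump; case: leqP; lia.
rewrite /bump /unbump; case: (ltnP i j) => H1; case: (leqP i p) => H2; case: ltnP; lia.
Qed.

Ltac fvs := rewrite /fv; repeat (case: eqP => ?); try lia; try reflexivity.

Section Tetra.
Variables (N j0 : nat) (Hj0 : j0 < N).
Variables (e01 e02 e03 e12 e13 e23 : sobj X N) (y0 y2 y3 : sobj X N.+1).
Hypotheses (S0 : Shape (fv j0 e23 e13 e12) y0) (S2 : Shape (fv j0 e13 e03 e01) y2)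
  (S3 : Shape (fv j0 e12 e02 e01) y3).

Definition tG (i : nat) : sobj X N.+1 :=
  if i == j0 then y0 else if i == j0.+2 then y2 else if i == j0.+3 then y3 else cst x N.+1.

Lemma tetra : exists y1, Shape (fv j0 e23 e03 e02) y1.
Proof.
case: S0 => T0 F0; case: S2 => T2 F2; case: S3 => T3 F3.
have Hk : j0.+1 <= N.+2 by lia.
case: (@horn X tX HX Hwc N j0.+1 Hk tG).
- move=> i j Hij Hj Hik Hjk; rewrite /tG.
  (repeat case: eqP => ?); rewrite ?fc_cst; (try rewrite F0; try lia); (try rewrite F2; try lia);
    (try rewrite F3; try lia); (try rewrite F0; try lia); (try rewrite F2; try lia);
    (try rewrite F3; try lia); fvs.
- move=> i Hi Hik m s [Hdeg|Him].
  + have [p [Hp E]] := deg_noninj Hdeg.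
    apply: (noninj_thin HX Hstr); exists p; split => //; move: E.
    rewrite !sv_comp !sv_dl ?sv_le //; rewrite /bump; case: leqP; case: leqP; lia.
  + have HI : forall v, j0 <= v <= j0.+2 -> exists p, p <= m /\ bump i (sv s p) = v.
      move=> v Hv; have := Him v ltac:(lia) ltac:(lia); case/in_imageP => p [Hp E].
      exists p; split => //; move: E; rewrite sv_comp sv_dl ?sv_le //.
    have Hni : forall v, j0 <= v <= j0.+2 -> i <> v.
      move=> v Hv Eiv; case: (HI v Hv) => p [_ E]; move: E; rewrite /bump; case: leqP; lia.
    have Hm1 : 1 <= m.
      case: (HI j0 ltac:(lia)) => p [Hp E]; case: (HI j0.+1 ltac:(lia)) => q [Hq E'].
      case: (posnP m) => // Hm0; subst m; have p0 : p = 0 by lia.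
      have q0 : q = 0 by lia. subst p q; lia.
    rewrite /tG; case: eqP => [Ei|_]; first by case: (Hni j0 ltac:(lia)).
    case: eqP => [Ei|_]; first by case: (Hni j0.+2 ltac:(lia)).
    case: eqP => [Ei|_]; last by rewrite (cst_act HX); apply: cst_thin.
    subst i; apply: (thin_of HX Hstr (P := fun v => j0 <= v <= j0.+2)) => //.
    * move=> v Hv HP; rewrite F3 //; fvs.
    * move=> v Hv _; case: (HI v Hv) => p [Hp E]; exists p; split => //.
      move: E; rewrite /bump; case: leqP; lia.
- move=> w [Tw Fw].
  exists (fc j0.+1 w); split.
  + apply: (thin_ext HX Hstr Hwc Hk) => // i Hi Hik; rewrite Fw // /tG.
    (repeat case: eqP => ?) => //; by apply: cst_thin.
  + move=> i Hi; case: (boolP (i < j0.+1)) => Hi0.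
    * rewrite (fc_fc HX) //; try lia. rewrite Fw; try lia. rewrite /tG.
      (repeat case: eqP => ?); rewrite ?fc_cst; (try rewrite F0; try lia); fvs.
    * have E : fc i (fc j0.+1 w) = fc j0.+1 (fc i.+1 w).
        rewrite (@fc_fc X HX N j0.+1 i.+1 w) //; lia.
      rewrite E Fw; try lia; rewrite /tG.
      (repeat case: eqP => ?); rewrite ?fc_cst; (try rewrite F2; try lia); (try rewrite F3; try lia); fvs.
Qed.
End Tetra.
End XS3.

Lemma sg_dl_j N j : j <= N -> mcomp (sg N j) (dl N j) = mid N.
Proof.
move=> Hj; apply: mono_ext => p Hp; rewrite sv_comp sv_dl // ?sv_sg ?sv_id //;
rewrite /bump /unbump; case: (leqP j p) => ?; try case: ltnP; lia.
Qed.
Lemma sg_dl_j1 N j : j <= N -> mcomp (sg N j) (dl N j.+1) = mid N.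
Proof.
move=> Hj; apply: mono_ext => p Hp; rewrite sv_comp sv_dl // ?sv_sg ?sv_id //;
rewrite /bump /unbump; case: (leqP j.+1 p) => ?; try case: ltnP; lia.
Qed.
Lemma sg_dl_miss N j i : j <= N -> i <= N.+1 -> i <> j -> i <> j.+1 ->
  in_boundary N N (mcomp (sg N j) (dl N i)).
Proof.
move=> Hj Hi H1 H2; apply: (@misses_bdry _ _ _ (if i < j then i else i.-1)).
  case: ltnP; lia.
move=> p Hp; rewrite sv_comp sv_dl // sv_sg; last by rewrite /bump; case: leqP; lia.
rewrite /bump /unbump; case: (ltnP i j) => H3; case: (leqP i p) => H4; case: ltnP; lia.
Qed.

Section XS4.
Unset Implicit Arguments.
Variables (X : sset) (tX : thinness X) (HX : is_sset X) (Hstr : is_stratified tX)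
  (Hwc : weak_complicial tX) (x : sobj X 0) (n : nat) (Hn : 1 <= n).
Set Implicit Arguments.

Notation fc := (@fc X).
Notation Shape := (@Shape X tX).
Notation bdry := (@bdry X x).
Notation fv := (@fv X x).

Definition P2 j (c c' : sobj X n) := exists t, Shape (fv j c' c (cst x n)) t.

Definition phi m (u : mono m n) (t : mono m 1) : mono m n.+1.
Proof.
refine (@nmono m n.+1 (fun q => sv u q + ((sv u q == n) && (sv t q == 1))) _ _).
- move=> p q Hpq Hq; have := sv_mono u Hpq Hq; have := sv_mono t Hpq Hq.
  have := sv_le u q; have := sv_le t q; have := sv_le t p.
  case: (sv u p == n) / eqP; case: (sv u q == n) / eqP; case: (sv t p == 1) / eqP;
    case: (sv t q == 1) / eqP => /=; lia.
- move=> p _; have := sv_le u p; case: (_ && _); lia.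
Defined.

Lemma sv_phi m u t q : q <= m -> sv (@phi m u t) q = sv u q + ((sv u q == n) && (sv t q == 1)).
Proof. move=> Hq; by rewrite /phi sv_nmono. Qed.

Lemma prism c c' : P2 n c c' -> bdry c -> bdry c' -> htp tX x c c'.
Proof.
case=> tau [Tt Ft] Hc Hc'.
have Fb : forall j, j <= n.+1 -> bdry (fc j tau).
  move=> j Hj; rewrite Ft // /fv; (repeat case: ifP => _); by [|apply: bdry_cst].
split => //; split => //; split.
  move=> m a Ha; by rewrite /yon Hc // Hc'.
exists (fun m (p : sobj (sprod (Delta n) (Delta 1)) m) => sact (phi p.1 p.2) tau).
split; [|split; [|split; [|split]]].
- move=> m k f [u t] /=; rewrite -(sact_comp HX); congr sact.
  apply: mono_ext => q Hq; by rewrite sv_comp !sv_phi // ?sv_le // !sv_comp.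
- move=> m [u t] [/= Hu Ht] /=.
  have [q [Hq Eq]] := deg_noninj Hu.
  case: (classic (sv (phi u t) q = sv (phi u t) q.+1)) => Es.
    apply: (noninj_thin HX Hstr); by exists q.
  have Hq1 : sv (phi u t) q = n /\ sv (phi u t) q.+1 = n.+1.
    change (sv u q = sv u q.+1) in Eq.
    move: Es; rewrite (sv_phi u t (ltnW Hq)) (sv_phi u t Hq) -Eq; have := sv_le u q; have := sv_le t q; have := sv_le t q.+1.
    have := sv_mono t (leqnSn q) Hq.
    case: (sv u q == n) / eqP; case: (sv t q == 1) / eqP; case: (sv t q.+1 == 1) / eqP => /=; lia.
  case: (trich (phi u t)) => [[i [Hi Hmi]]|[Hni|[Em Hid]]].
  + have Hin : i < n.
    { case: (ltnP i n) => Hin; first done; exfalso; case: (eqVneq i n) => [Ei|Ni].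
      - by apply: (Hmi q ltac:(lia)); rewrite Hq1.1 Ei.
      - by apply: (Hmi q.+1 Hq); rewrite Hq1.2; lia. }
    rewrite (sact_miss HX tau Hi Hmi) Ft // /fv.
    do 3 (case: eqP => ?; first lia); rewrite (cst_act HX); apply: cst_thin => //; lia.
  + exact: noninj_thin.
  + subst m; have -> : phi u t = mid n.+1 by apply: mono_ext => p Hp; rewrite Hid // sv_id.
    by rewrite (sact_id HX).
- move=> m a /=; rewrite /yon.
  have -> : phi a (mconst m ord0) = mcomp (dl n n.+1) a.
    apply: mono_ext => q Hq; rewrite sv_phi // sv_comp sv_dl // ?sv_le // sv_const /bump.
    have := sv_le a q; rewrite /= andbF; case: ltnP => /=; lia.
  rewrite (sact_comp HX) -/(fc _ _) Ft // /fv; case: eqP => [?|_]; first lia.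
  by rewrite eqxx.
- move=> m a /=; rewrite /yon.
  have -> : phi a (mconst m ord_max) = mcomp (dl n n) a.
    apply: mono_ext => q Hq; rewrite sv_phi // sv_comp sv_dl // ?sv_le // sv_const /bump.
    have := sv_le a q; case: (leqP n) => /=; case: eqP => /=; rewrite ?andbT; lia.
  by rewrite (sact_comp HX) -/(fc _ _) Ft // /fv eqxx.
- move=> m a t Ha /=; rewrite /yon (Hc _ _ Ha).
  have [v [Hv Hmv]] := bdry_misses Ha.
  case: (ltnP v n) => Hvn.
  + have Hm : misses (phi a t) v.
    { move=> q Hq; rewrite sv_phi //; have := Hmv q Hq; have := sv_le a q.
      case: (sv a q == n) / eqP => /=; try lia. }
    have Hv1 : v <= n.+1 by lia.
    rewrite (sact_miss HX tau Hv1 Hm) Ft; try lia.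
    rewrite /fv; do 3 (case: eqP => ?; first lia); exact: (cst_act HX).
  + have Evn : v = n by lia. subst v.
    apply: (two_miss HX Fb (i := n) (i' := n.+1)) => //; try lia.
    * move=> q Hq; rewrite sv_phi //; have := Hmv q Hq; have := sv_le a q.
      case: (sv a q == n) / eqP => /=; lia.
    * move=> q Hq; rewrite sv_phi //; have := Hmv q Hq; have := sv_le a q.
      case: (sv a q == n) / eqP => /=; lia.
Qed.

Ltac fvs := rewrite /fv; repeat (case: eqP => ?); try lia; try reflexivity.

Lemma tstep j u v : j < n -> bdry u -> bdry v -> P2 j u v -> P2 j.+1 u v.
Proof.
move=> Hj Hu Hv [t St].
have S0 : Shape (fv j (cst x n) v v) (dg j.+1 v).
  apply: Shape_ext (dg_shape HX Hstr _ Hv) => //; move=> i Hi; fvs.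
have S2 : Shape (fv j v v (cst x n)) (dg j v).
  apply: Shape_ext (dg_shape HX Hstr _ Hv); [move=> i Hi; fvs | lia].
have [y1 S1] := tetra HX Hstr Hwc Hj S0 S2 St.
exists y1; apply: Shape_ext S1 => i Hi; fvs.
Qed.

Lemma tsteps j u v : j <= n -> bdry u -> bdry v -> P2 j u v -> P2 n u v.
Proof.
move=> Hj Hu Hv; move: {2}(n - j) (erefl (n - j)) => d; elim: d j Hj => [|d IH] j Hj Ed H.
  by have -> : n = j by lia.
apply: (IH j.+1); [lia | lia | apply: tstep => //; lia].
Qed.

Definition tj (j : nat) : mono n 1.
Proof.
refine (@nmono n 1 (fun v => j <= v) _ _).
- move=> p q Hpq _; case: (leqP j p); case: (leqP j q) => /=; lia.
- move=> p _; case: (j <= p); lia.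
Defined.
Definition tt (j : nat) : mono n.+1 1.
Proof.
refine (@nmono n.+1 1 (fun v => j < v) _ _).
- move=> p q Hpq _; case: (ltnP j p); case: (ltnP j q) => /=; lia.
- move=> p _; case: (j < p); lia.
Defined.

Lemma tt_dl_j j : j <= n -> mcomp (tt j) (dl n j) = tj j.
Proof.
move=> Hj; apply: mono_ext => p Hp; rewrite sv_comp sv_dl; try lia.
rewrite /tt /tj !sv_nmono; try lia; last by rewrite /bump; case: leqP; lia.
rewrite /bump; case: (leqP j p) => H /=; case: ltnP; lia.
Qed.
Lemma tt_dl_j1 j : j <= n -> mcomp (tt j) (dl n j.+1) = tj j.+1.
Proof.
move=> Hj; apply: mono_ext => p Hp; rewrite sv_comp sv_dl; try lia.
rewrite /tt /tj !sv_nmono; try lia; last by rewrite /bump; case: leqP; lia.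
rewrite /bump; case: (leqP j.+1 p) => H /=; case: ltnP; case: leqP; lia.
Qed.

Lemma chain a a' : htp tX x a a' -> exists c : nat -> sobj X n,
  c n.+1 = a /\ c 0 = a' /\ (forall j, j <= n.+1 -> bdry (c j)) /\
  forall j, j <= n -> P2 j (c j.+1) (c j).
Proof.
case=> Ha [Ha' [_ [H [Hs [Ht [H0 [H1 HB]]]]]]].
exists (fun j => H n (mid n, tj j)); split; [|split; [|split]].
- have -> : tj n.+1 = mconst n ord0.
    apply: mono_ext => p Hp; rewrite /tj sv_nmono // sv_const ltnNge Hp //.
  by move: (H0 n (mid n)); rewrite /yon (sact_id HX).
- have -> : tj 0 = mconst n ord_max.
    apply: mono_ext => p Hp; rewrite /tj sv_nmono // sv_const leq0n.
    by [].
  by move: (H1 n (mid n)); rewrite /yon (sact_id HX).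
- move=> j Hj m b Hb; rewrite -(Hs m n b (mid n, tj j)) /= HB.
    by rewrite /yon mcomp_id_l; apply: Ha.
  by rewrite mcomp_id_l.
- move=> j Hj; exists (H n.+1 (sg n j, tt j)); split.
  + apply: Ht; split => /=.
    * exists n, (sg n j), (mid n); split => //; by rewrite /= mcomp_id_l.
    * left; exists 1, (tt j), (mid 1); split => //; by rewrite /= mcomp_id_l.
  + move=> i Hi; rewrite /fc -(Hs n n.+1 (dl n i) (sg n j, tt j)) /=.
    rewrite /fv; case: eqP => [->|Hij]; first by rewrite sg_dl_j // tt_dl_j.
    case: eqP => [->|Hij1]; first by rewrite sg_dl_j1 // tt_dl_j1.
    rewrite HB; last exact: sg_dl_miss.
    rewrite /yon (Ha _ _ (sg_dl_miss Hj Hi Hij Hij1)).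
    by case: eqP.
Qed.

Lemma htp_R (R : sobj X n -> sobj X n -> Prop) :
  (forall u v, bdry u -> bdry v -> P2 n u v -> R u v) ->
  (forall u v w, bdry u -> bdry v -> bdry w -> R u v -> R v w -> R u w) ->
  forall a a', htp tX x a a' -> R a a'.
Proof.
move=> HP HT a a' Hh.
have [c [Ea [Ea' [Hb Hc]]]] := chain Hh.
have Hj : forall j, j <= n -> R (c j.+1) (c 0).
  elim=> [|j IH] Hj.
    apply: HP; try apply: Hb; try lia; apply: (tsteps (j := 0)) => //; try apply: Hb; try lia.
    exact: Hc.
  apply: (HT _ (c j.+1)); try apply: Hb; try lia.
    apply: HP; try apply: Hb; try lia; apply: (tsteps (j := j.+1)) => //; try apply: Hb; try lia.
    exact: Hc.
  apply: IH; lia.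
rewrite -Ea -Ea'; exact: Hj.
Qed.
End XS4.

Section XS5.
Unset Implicit Arguments.
Variables (X : sset) (tX : thinness X) (HX : is_sset X) (Hstr : is_stratified tX)
  (Hwc : weak_complicial tX) (x : sobj X 0).
Set Implicit Arguments.

Notation fc := (@fc X).
Notation Shape := (@Shape X tX).
Notation bdry := (@bdry X x).
Notation fv := (@fv X x).

Ltac fvs := rewrite /fv; repeat (case: eqP => ?); try lia; try reflexivity.

Lemma bdry_face_k M (y : sobj X M.+1) k : k <= M.+1 ->
  (forall i, i <= M.+1 -> i <> k -> bdry (fc i y)) -> bdry (fc k y).
Proof.
move=> Hk Hb m b Hbd; have [v [Hv Hmv]] := bdry_misses Hbd.
rewrite /fc -(sact_comp HX).
set s := mcomp (dl M k) b.
have Hi : bump k v <= M.+1 by rewrite /bump; case: leqP; lia.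
have Hik : bump k v <> k by rewrite /bump; case: leqP; lia.
have Hm1 : misses s (bump k v).
  move=> p Hp; rewrite /s sv_comp sv_dl ?sv_le //; have := Hmv p Hp; have := sv_le b p.
  rewrite /bump; case: leqP; case: leqP; lia.
have Hm2 : misses s k.
  move=> p Hp; rewrite /s sv_comp sv_dl ?sv_le //; rewrite /bump; case: leqP; lia.
rewrite (sact_miss HX y Hi Hm1).
apply: (bdry_miss (Hb _ Hi Hik) _ (unb_misses Hi Hk Hik Hm1 Hm2)).
rewrite /unbump; case: ltnP; lia.
Qed.

Variable N : nat.

Definition Mr (a b c : sobj X N.+1) := exists t, Shape (fv N a c b) t.

Lemma Mr_bdry a b c : bdry a -> bdry b -> Mr a b c -> bdry c.
Proof.
move=> Ha Hb [t [Tt Ft]].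
have -> : c = fc N.+1 t by rewrite Ft // /fv; case: eqP => ?; [lia | by rewrite eqxx].
apply: bdry_face_k => // i Hi Hik; rewrite Ft // /fv.
(repeat case: eqP => ?); try lia; by [|apply: bdry_cst].
Qed.

Lemma exist_M a b : bdry a -> bdry b -> exists c, Mr a b c /\ bdry c.
Proof.
move=> Ha Hb.
pose G i := if i == N then a else if i == N.+2 then b else cst x N.+1.
have HG : forall i, bdry (G i).
  move=> i; rewrite /G; (repeat case: ifP => _); by [|apply: bdry_cst].
have Hk : N.+1 <= N.+2 by [].
case: (@horn X tX HX Hwc N N.+1 Hk G).
- move=> i j Hij Hj _ _.
  have E1 : fc i (G j) = cst x N by apply: bdry_fc; [apply: HG | lia].
  have E2 : fc j.-1 (G i) = cst x N by apply: bdry_fc; [apply: HG | lia].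
  by rewrite E1 E2.
- move=> i Hi Hik m s [Hdeg|Him].
  + have [p [Hp E]] := deg_noninj Hdeg.
    apply: (noninj_thin HX Hstr); exists p; split => //; move: E.
    rewrite !sv_comp !sv_dl ?sv_le //; rewrite /bump; case: leqP; case: leqP; lia.
  + have HI : forall v, N <= v <= N.+2 -> exists p, p <= m /\ bump i (sv s p) = v.
      move=> v Hv; have := Him v ltac:(lia) ltac:(lia); case/in_imageP => p [Hp E].
      exists p; split => //; move: E; rewrite sv_comp sv_dl ?sv_le //.
    have Hni : forall v, N <= v <= N.+2 -> i <> v.
      move=> v Hv Eiv; case: (HI v Hv) => p [_ E]; move: E; rewrite /bump; case: leqP; lia.
    have Hm1 : 1 <= m.
      case: (HI N ltac:(lia)) => p [Hp E]; case: (HI N.+1 ltac:(lia)) => q [Hq E'].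
      case: (posnP m) => // Hm0; subst m; have p0 : p = 0 by lia.
      have q0 : q = 0 by lia. subst p q; lia.
    rewrite /G; case: eqP => [Ei|_]; first by case: (Hni N ltac:(lia)).
    case: eqP => [Ei|_]; first by case: (Hni N.+2 ltac:(lia)).
    rewrite (cst_act HX); exact: cst_thin.
- move=> t [Tt Ft]; exists (fc N.+1 t).
  have S : Shape (fv N a (fc N.+1 t) b) t.
  { split.
    + have := Tt _ (mid N.+2); rewrite (sact_id HX); apply; right => v Hv _.
      apply/in_imageP; exists v; split => //; exact: sv_id.
    + move=> i Hi; case: (eqVneq i N.+1) => [->|Hne].
      * rewrite /fv; case: eqP => ?; [lia|by rewrite eqxx].
      * rewrite Ft //; last by apply/eqP. rewrite /G /fv.
        repeat (case: eqP => ?); try lia; reflexivity. }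
  split; first by exists t.
  apply: (Mr_bdry Ha Hb); by exists t.
Qed.

Lemma tc_to (a b : sobj X N.+1) (t : sobj X N.+2) : theta_cond tX x a b t -> Shape (fv N a (fc N.+1 t) b) t.
Proof.
case=> Tt [Fa [Fb Fc]]; split.
- have := Tt _ (mid N.+2); rewrite (sact_id HX); apply; right => v Hv _.
  apply/in_imageP; exists v; split => //; exact: sv_id.
- move=> i Hi; rewrite /fv; case: eqP => [->|H1]; first exact: Fa.
  case: eqP => [->|H2]; first done.
  case: eqP => [->|H3]; first exact: Fb.
  have := Fc (inord i); rewrite inordK; try lia.
  move=> H; apply: H; lia.
Qed.

Lemma to_tc (a b c : sobj X N.+1) (t : sobj X N.+2) : Shape (fv N a c b) t -> theta_cond tX x a b t /\ c = fc N.+1 t.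
Proof.
case=> Tt Ft; split; last by rewrite Ft // /fv; case: eqP => ?; [lia|by rewrite eqxx].
split; [|split; [|split]].
- move=> m g [Hdeg|Him].
  + apply: (noninj_thin HX Hstr); exact: deg_noninj.
  + have HI : forall v, N <= v <= N.+2 -> exists p, p <= m /\ sv g p = v.
      move=> v Hv; have := Him v ltac:(lia) ltac:(lia); case/in_imageP => p [Hp E].
      by exists p.
    apply: (thin_of HX Hstr (P := fun v => N <= v <= N.+2)) => //.
    * move=> i Hi HP; rewrite Ft //; fvs.
    * case: (HI N ltac:(lia)) => p [Hp E]; case: (HI N.+1 ltac:(lia)) => q [Hq E'].
      case: (posnP m) => // Hm0; subst m; have p0 : p = 0 by lia.
      have q0 : q = 0 by lia. subst p q; lia.
    * move=> v Hv _; exact: HI.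
- rewrite /face -/(fc N t) Ft; try lia. by rewrite /Submission.fv /= eqxx.
- rewrite /face -/(fc N.+2 t) Ft; try lia. by rewrite /Submission.fv /=; do 2 (case: eqP => ?; first lia); rewrite eqxx.
- move=> i H1 H2 H3; rewrite /face -(inord_val i) -/(fc (nat_of_ord i) t) Ft; last first.
    rewrite -ltnS; exact: ltn_ord.
  rewrite /fv; do 3 (case: eqP => ?; first lia); done.
Qed.

Notation P2n := (@P2 X tX x N.+1 N.+1).
Notation ecst := (cst x N.+1).

Lemma W1 a b c c' : bdry a -> Mr a b c -> Mr a b c' -> P2n c c'.
Proof.
move=> Ha [t1 S1] [t2 S2].
have S0 : Shape (fv N ecst a a) (dg N.+1 a).
  apply: Shape_ext (dg_shape HX Hstr _ Ha) => //; move=> i Hi; fvs.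
have [y1 Sy] := tetra HX Hstr Hwc (ltnSn N) S0 S2 S1.
exists y1; apply: Shape_ext Sy => i Hi; fvs.
Qed.

Lemma W2 a b c a' c'' : Mr a b c -> P2n a a' -> Mr a' b c'' -> P2n c c''.
Proof.
move=> [t1 S1] [t0 S0] [t2 S2].
have S0' : Shape (fv N ecst a' a) t0 by apply: Shape_ext S0 => i Hi; fvs.
have [y1 Sy] := tetra HX Hstr Hwc (ltnSn N) S0' S2 S1.
exists y1; apply: Shape_ext Sy => i Hi; fvs.
Qed.

Lemma W3 a b c b' : bdry a -> Mr a b c -> P2n b b' -> Mr a b' c.
Proof.
move=> Ha [t2 S2] [t3 S3].
have S3' : Shape (fv N ecst b' b) t3 by apply: Shape_ext S3 => i Hi; fvs.
have S0 : Shape (fv N a a ecst) (dg N a).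
  apply: Shape_ext (dg_shape HX Hstr _ Ha); [move=> i Hi; fvs | lia].
have [y1 Sy] := tetra HX Hstr Hwc (ltnSn N) S0 S2 S3'.
by exists y1.
Qed.

Lemma Wassoc al be ga ab bg abg : Mr al be ab -> Mr be ga bg -> Mr ab ga abg -> Mr al bg abg.
Proof.
move=> [t0 S0] [t3 S3] [t2 S2].
have [y1 Sy] := tetra HX Hstr Hwc (ltnSn N) S0 S2 S3.
by exists y1.
Qed.

Lemma Mr_el b : bdry b -> Mr ecst b b.
Proof.
move=> Hb; exists (dg N.+1 b); apply: Shape_ext (dg_shape HX Hstr _ Hb) => //; move=> i Hi; fvs.
Qed.

Lemma Mr_er a : bdry a -> Mr a ecst a.
Proof.
move=> Ha; exists (dg N a); apply: Shape_ext (dg_shape HX Hstr _ Ha); [move=> i Hi; fvs | lia].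
Qed.

Definition crst := clos_refl_sym_trans _ (@htp X tX x N.+1).

Lemma P2_crst c c' : bdry c -> bdry c' -> P2n c c' -> crst c c'.
Proof. move=> Hc Hc' H; apply: rst_step; by apply: (@prism X tX HX Hstr x N.+1 (ltn0Sn N) c c'). Qed.

Definition Good a a' := bdry a /\ bdry a' /\
  forall b c c', bdry b -> Mr a b c -> Mr a' b c' -> crst c c'.
Definition Good2 b b' := bdry b /\ bdry b' /\
  forall a c c', bdry a -> Mr a b c -> Mr a b' c' -> crst c c'.

Lemma crst_Good a a' : crst a a' -> a = a' \/ Good a a'.
Proof.
elim=> {a a'} [u v Huv|u|u v _ IH|u v w _ IH1 _ IH2].
- right; apply: (htp_R HX Hstr Hwc (ltn0Sn N) (R := Good)) Huv.
  + move=> p q Hp Hq H; split => //; split => // b c c' Hb M1 M2.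
    apply: P2_crst.
    * exact: Mr_bdry Hp Hb M1.
    * exact: Mr_bdry Hq Hb M2.
    * exact: W2 M1 H M2.
  + move=> p q r Hp Hq Hr [_ [_ G1]] [_ [_ G2]]; split => //; split => // b c c' Hb M1 M2.
    have [d [Md Hd]] := exist_M Hq Hb.
    apply: rst_trans (G1 _ _ _ Hb M1 Md) (G2 _ _ _ Hb Md M2).
- by left.
- case: IH => [->|[H1 [H2 H3]]]; [by left | right].
  split => //; split => // b c c' Hb M1 M2; apply: rst_sym; exact: H3 M2 M1.
- case: IH1 => [->|G1] //; case: IH2 => [<-|G2]; [by right | right].
  case: G1 => [H1 [H2 G1]]; case: G2 => [_ [H3 G2]]; split => //; split => // b c c' Hb M1 M2.
  have [d [Md Hd]] := exist_M H2 Hb.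
  apply: rst_trans (G1 _ _ _ Hb M1 Md) (G2 _ _ _ Hb Md M2).
Qed.

Lemma crst_Good2 b b' : crst b b' -> b = b' \/ Good2 b b'.
Proof.
elim=> {b b'} [u v Huv|u|u v _ IH|u v w _ IH1 _ IH2].
- right; apply: (htp_R HX Hstr Hwc (ltn0Sn N) (R := Good2)) Huv.
  + move=> p q Hp Hq H; split => //; split => // a c c' Ha M1 M2.
    have M3 := W3 Ha M1 H.
    apply: P2_crst.
    * exact: Mr_bdry Ha Hq M3.
    * exact: Mr_bdry Ha Hq M2.
    * exact: W1 Ha M3 M2.
  + move=> p q r Hp Hq Hr [_ [_ G1]] [_ [_ G2]]; split => //; split => // a c c' Ha M1 M2.
    have [d [Md Hd]] := exist_M Ha Hq.
    apply: rst_trans (G1 _ _ _ Ha M1 Md) (G2 _ _ _ Ha Md M2).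
- by left.
- case: IH => [->|[H1 [H2 H3]]]; [by left | right].
  split => //; split => // a c c' Ha M1 M2; apply: rst_sym; exact: H3 M2 M1.
- case: IH1 => [->|G1] //; case: IH2 => [<-|G2]; [by right | right].
  case: G1 => [H1 [H2 G1]]; case: G2 => [_ [H3 G2]]; split => //; split => // a c c' Ha M1 M2.
  have [d [Md Hd]] := exist_M Ha H2.
  apply: rst_trans (G1 _ _ _ Ha M1 Md) (G2 _ _ _ Ha Md M2).
Qed.

Lemma WD a a' b b' c c' : crst a a' -> crst b b' -> bdry a -> bdry b ->
  Mr a b c -> Mr a' b' c' -> crst c c'.
Proof.
move=> Haa Hbb Ha Hb M1 M2.
have Ha' : bdry a' by case: (crst_Good Haa) => [<-|[_ []]].
have Hb' : bdry b' by case: (crst_Good2 Hbb) => [<-|[_ []]].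
have [d [Md Hd]] := exist_M Ha' Hb.
apply: (rst_trans _ _ _ d).
- case: (crst_Good Haa) => [E|[_ [_ G1]]]; last exact: G1 _ _ _ Hb M1 Md.
  subst a'; apply: P2_crst => //; first exact: Mr_bdry Ha Hb M1.
  exact: W1 Ha M1 Md.
- case: (crst_Good2 Hbb) => [E|[_ [_ G2]]]; last exact: G2 _ _ _ Ha' Md M2.
  subst b'; apply: P2_crst => //; first exact: Mr_bdry Ha' Hb M2.
  exact: W1 Ha' Md M2.
Qed.
End XS5.

Section XS6.
Unset Implicit Arguments.
Variables (X : sset) (tX : thinness X) (HX : is_sset X) (Hstr : is_stratified tX)
  (Hwc : weak_complicial tX) (x : sobj X 0) (N : nat).
Set Implicit Arguments.

Notation bdry := (@bdry X x).
Notation T := (tau tX x N.+1).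
Notation Mr := (@Mr X tX x N).
Notation crst := (@crst X tX x N).

Lemma tau_ext (P Q : T) : sval P = sval Q -> P = Q.
Proof.
case: P Q => [p hp] [q hq] /= E; subst q; congr exist; exact: proof_irrelevance.
Qed.

Lemma cls_eq u v : crst u v -> cls tX x u = cls tX x v.
Proof.
move=> H; apply: functional_extensionality => w; apply: propositional_extensionality.
rewrite /cls; split => H'.
- apply: rst_trans (rst_sym _ _ _ _ H) H'.
- exact: rst_trans H H'.
Qed.

Definition rep (P : T) : sobj X N.+1 :=
  proj1_sig (constructive_indefinite_description _ (proj2_sig P)).
Lemma rep_spec (P : T) : bdry (rep P) /\ sval P = cls tX x (rep P).
Proof. rewrite /rep; by case: (constructive_indefinite_description _ _). Qed.

Definition mulc (a b : sobj X N.+1) : sobj X N.+1 :=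
  match excluded_middle_informative (exists c, Mr a b c /\ bdry c) with
  | left H => proj1_sig (constructive_indefinite_description _ H)
  | right _ => a
  end.
Lemma mulc_spec a b : bdry a -> bdry b -> Mr a b (mulc a b) /\ bdry (mulc a b).
Proof.
move=> Ha Hb; rewrite /mulc; case: excluded_middle_informative => H.
- by case: (constructive_indefinite_description _ H).
- by exfalso; apply: H; apply: (exist_M HX Hstr Hwc).
Qed.

Lemma mulc_bdry (P Q : T) : bdry (mulc (rep P) (rep Q)).
Proof. exact: (mulc_spec (rep_spec P).1 (rep_spec Q).1).2. Qed.

Definition mul (P Q : T) : T :=
  exist _ (cls tX x (mulc (rep P) (rep Q))) (ex_intro _ _ (conj (mulc_bdry P Q) erefl)).

Lemma rep_crst a (Ha : bdry a) : crst a (rep (tcls tX Ha)).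
Proof.
have [_ E] := rep_spec (tcls tX Ha).
have : cls tX x (rep (tcls tX Ha)) (rep (tcls tX Ha)) by apply: rst_refl.
by rewrite -E.
Qed.

Lemma mul_cls a b c (Ha : bdry a) (Hb : bdry b) : Mr a b c ->
  sval (mul (tcls tX Ha) (tcls tX Hb)) = cls tX x c.
Proof.
move=> M; rewrite /=; apply: cls_eq.
have [Ha0 _] := rep_spec (tcls tX Ha); have [Hb0 _] := rep_spec (tcls tX Hb).
have [M0 _] := mulc_spec Ha0 Hb0.
apply: (WD HX Hstr Hwc _ _ Ha0 Hb0 M0 M); apply: rst_sym; exact: rep_crst.
Qed.

Lemma tcls_rep (P : T) : P = tcls tX (rep_spec P).1.
Proof. apply: tau_ext; exact: (rep_spec P).2. Qed.
End XS6.

Theorem mainTheorem4 (X : sset) (tX : thinness X)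
  (HX : is_sset X) (Hstr : is_stratified tX) (Hwc : weak_complicial tX)
  (x : sobj X 0) (n : nat) (Hn : 1 <= n) :
  (forall a b : sobj X n, bdry_const x a -> bdry_const x b ->
     exists t : sobj X n.+1, theta_cond tX x a b t) /\
  exists mul : tau tX x n -> tau tX x n -> tau tX x n,
    (forall (a b : sobj X n) (Ha : bdry_const x a) (Hb : bdry_const x b)
            (t : sobj X n.+1),
       theta_cond tX x a b t ->
       sval (mul (tcls tX Ha) (tcls tX Hb)) = cls tX x (face (inord n) t)) /\
    associative mul /\
    exists e : tau tX x n,
      sval e = cls tX x (cst x n) /\ left_id e mul /\ right_id e mul.
Proof.
case: n Hn => [//|N] _.
split.
  move=> a b Ha Hb; have [c [[t St] _]] := exist_M HX Hstr Hwc Ha Hb.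
  exists t; exact: (to_tc HX Hstr St).1.
exists (@mul X tX HX Hstr Hwc x N); split; [|split].
- move=> a b Ha Hb t Ht; apply: mul_cls.
  exists t; have := tc_to HX Ht; exact.
- move=> P Q R.
  rewrite [P]tcls_rep [Q]tcls_rep [R]tcls_rep.
  set a := rep P; set b := rep Q; set c := rep R.
  move: (rep_spec P).1 (rep_spec Q).1 (rep_spec R).1 => Ha Hb Hc.
  have [Mab Hab] := mulc_spec HX Hstr Hwc Ha Hb.
  have [Mbc Hbc] := mulc_spec HX Hstr Hwc Hb Hc.
  have [Mabg Habg] := mulc_spec HX Hstr Hwc Hab Hc.
  have E1 : mul HX Hstr Hwc (tcls tX Hb) (tcls tX Hc) = tcls tX Hbc.
    apply: tau_ext; exact: mul_cls.
  have E2 : mul HX Hstr Hwc (tcls tX Ha) (tcls tX Hb) = tcls tX Hab.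
    apply: tau_ext; exact: mul_cls.
  rewrite E1 E2; apply: tau_ext.
  rewrite (mul_cls HX Hstr Hwc _ _ Mabg).
  exact: (mul_cls HX Hstr Hwc _ _ (Wassoc HX Hstr Hwc Mab Mbc Mabg)).
- exists (tcls tX (@bdry_cst X HX x N.+1)); split => //; split.
  + move=> P; rewrite (tcls_rep P); apply: tau_ext.
    by rewrite (mul_cls HX Hstr Hwc _ _ (Mr_el HX Hstr (rep_spec P).1)).
  + move=> P; rewrite (tcls_rep P); apply: tau_ext.
    by rewrite (mul_cls HX Hstr Hwc _ _ (Mr_er HX Hstr (rep_spec P).1)).
Qed.
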